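(* Let $v_1,\dots,v_m$ be distinct values and $X_1,\dots,X_n$ finite domain variables. Introduce variables $Y_1,\dots,Y_{n+1}$ with domains in $\{0,\dots,m\}$, $Y_1=0$, and for each $1\le i\le n$ the ternary constraint $D(X_i,Y_i,Y_{i+1})$ which holds iff $X_i\neq v_j$ for every $j>Y_i+1$, and $Y_{i+1}=Y_i+1$ if $X_i=v_{Y_i+1}$, and $Y_{i+1}=Y_i$ otherwise. Then (a) an assignment to $X_1,\dots,X_n$ satisfies $\mathrm{Precedence}([v_1,\dots,v_m],[X_1,\dots,X_n])$ iff it extends to an assignment of $Y_1,\dots,Y_{n+1}$ with $Y_1=0$ satisfying all $D(X_i,Y_i,Y_{i+1})$; and (b) if $D(Y_1)=\{0\}$ and every constraint $D(X_i,Y_i,Y_{i+1})$, $1\le i\le n$, is GAC (with all domains nonempty), then $\mathrm{Precedence}([v_1,\dots,v_m],[X_1,\dots,X_n])$ is GAC on the domains of $X_1,\dots,X_n$.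
   Context: A support of a constraint is an assignment of a value from its domain to each of its variables that satisfies it; a constraint is GAC iff every value in every variable's domain belongs to some support. For distinct values $a,b$, $\mathrm{Precedence}([a,b],[X_1,\dots,X_n])$ holds iff $\min\{i \mid X_i=a \text{ or } i=n+1\} < \min\{i \mid X_i=b \text{ or } i=n+2\}$; $\mathrm{Precedence}([v_1,\dots,v_m],[X_1,\dots,X_n])$ holds iff $\mathrm{Precedence}([v_i,v_{i+1}],[X_1,\dots,X_n])$ holds for all $1\le i<m$. *)

(* Defs.v *)
From mathcomp Require Import all_boot.
Set Implicit Arguments. Unset Strict Implicit. Unset Printing Implicit Defensive.

(* Conventions: variables X_1..X_n are represented 0-based as X 0 .. X (n-1);
   Y_1..Y_{n+1} as Y 0 .. Y n.  The values v_1..v_m are the list v (0-based),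
   m = size v.  Finite domains are lists. *)

(* Precedence([a,b],[X_1..X_n]):
   min{i | X_i = a or i = n+1} < min{i | X_i = b or i = n+2}  (1-based). *)
Definition first_or {T : eqType} (n : nat) (X : nat -> T) (a : T) (dflt : nat) : nat :=
  let s := mkseq X n in if a \in s then (index a s).+1 else dflt.

Definition precedence2 {T : eqType} (a b : T) (n : nat) (X : nat -> T) : bool :=
  first_or n X a n.+1 < first_or n X b n.+2.

Definition precedence {T : eqType} (v : seq T) (n : nat) (X : nat -> T) : bool :=
  all (fun p => precedence2 p.1 p.2 n X) (zip v (behead v)).

(* D(x, y, y'): x <> v_j for all j > y+1 (1-based, j <= m), and
   y' = y+1 if x = v_{y+1}, y' = y otherwise (v_{y+1} exists iff y < m). *)
Definition Dcons {T : eqType} (v : seq T) (x : T) (y y' : nat) : bool :=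
  [&& (x \notin drop y.+1 v) &
      (if (y < size v) && (x == nth x v y) then y' == y.+1 else y' == y)].

Definition precedence_GAC {T : eqType} (v : seq T) (n : nat) (DX : nat -> seq T) : Prop :=
  forall i, i < n -> forall a, a \in DX i ->
    exists X : nat -> T,
      (forall j, j < n -> X j \in DX j) /\ X i = a /\ precedence v n X.

Definition Dcons_GAC {T : eqType} (v : seq T) (dx : seq T) (dy dy' : seq nat) : Prop :=
  (forall x, x \in dx -> exists y y', [/\ y \in dy, y' \in dy' & Dcons v x y y']) /\
  (forall y, y \in dy -> exists x y', [/\ x \in dx, y' \in dy' & Dcons v x y y']) /\
  (forall y', y' \in dy' -> exists x y, [/\ x \in dx, y \in dy & Dcons v x y y']).

(* Main.v *)
Require Import Defs.
From mathcomp Require Import all_boot.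
Set Implicit Arguments.

Section S.
Variables (T : eqType) (d : T).

Lemma p2P (a b : T) n (X : nat -> T) : a != b ->
  precedence2 a b n X <-> (forall i, i < n -> X i = b -> exists2 j, j < i & X j = a).
Proof.
move=> nab; rewrite /precedence2 /first_or.
set s := mkseq X n.
have ss : size s = n by rewrite size_mkseq.
have ns : forall j, j < n -> nth d s j = X j by move=> j jn; rewrite nth_mkseq.
case Hb: (b \in s).
- have ibn : index b s < n by rewrite -ss index_mem.
  have Xib : X (index b s) = b by rewrite -ns // nth_index.
  have ble : forall i, i < n -> X i = b -> index b s <= i.
    by move=> i iN Xi; rewrite -Xi -ns // index_nth // ss.
  case Ha: (a \in s).
  + rewrite ltnS; split.
    * move=> lt i iN Xi; exists (index a s); first exact: leq_trans lt (ble _ iN Xi).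
      by rewrite -ns ?nth_index //; apply: ltn_trans lt ibn.
    * move=> H; have [j ji Xj] := H _ ibn Xib.
      have jn : j < n by apply: ltn_trans ji ibn.
      apply: leq_ltn_trans ji; rewrite -Xj -ns ?index_nth // ss //.
  + split=> [|H]; first by rewrite ltnS => H; by rewrite ltnNge (ltnW H) in ibn.
    exfalso; have [j ji Xj] := H _ ibn Xib.
    have jn : j < n by apply: ltn_trans ji ibn.
    by move: Ha; rewrite -Xj -ns // mem_nth // ss.
- split=> // _.
  + move=> i iN Xi; exfalso; move: Hb; rewrite -Xi -ns // mem_nth // ss //.
  + case Ha: (a \in s); last by rewrite ltnS.
    rewrite ltnS; have := index_mem a s; rewrite ss Ha => H; exact: ltnW.
Qed.

Definition Q (v : seq T) (X : nat -> T) i := forall k, k.+1 < size v ->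
  X i = nth d v k.+1 -> exists2 j, j < i & X j = nth d v k.

Lemma precP (v : seq T) n X : uniq v ->
  precedence v n X <-> (forall i, i < n -> Q v X i).
Proof.
rewrite /Q; elim: v => [|a r IH] /=; first by split.
case: r IH => [|b r] IH; first by split => // _ i _ k.
move=> /andP [nar Ur].
have nab : a != b by apply: contra nar => /eqP->; rewrite inE eqxx.
have Ur' := Ur; move: Ur' => /andP [_ Ur2].
have -> : precedence [:: a, b & r] n X = precedence2 a b n X && precedence (b :: r) n X by [].
split.
- move=> /andP [H1 H2] i iN [|k] /=.
  + by move=> _ Xi; exact: (proj1 (p2P _ _ _ _ nab) H1 i iN Xi).
  + move=> kl Xi; exact: (proj1 (IH Ur) H2 i iN k kl Xi).
- move=> H; apply/andP; split.
  + by apply/(p2P _ _ _ _ nab) => i iN Xi; apply: (H i iN 0).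
  + by apply/(IH Ur) => i iN k kl Xi; apply: (H i iN k.+1).
Qed.

Definition step (v : seq T) y x := if (y < size v) && (x == nth d v y) then y.+1 else y.

Lemma DconsE v x y y' : Dcons v x y y' = (x \notin drop y.+1 v) && (y' == step v y x).
Proof.
rewrite /Dcons /step; case yl: (y < size v) => //=.
by rewrite (set_nth_default d x yl); case: (x == nth d v y).
Qed.

Fixpoint Yf v (X : nat -> T) i := if i is i'.+1 then step v (Yf v X i') (X i') else 0.

Lemma memdrop v x y : x \in drop y v <-> exists2 k, y <= k < size v & x = nth d v k.
Proof.
split.
- move=> /(nthP d) [i]; rewrite size_drop nth_drop => il <-.
  exists (y + i) => //; rewrite leq_addr /=; by rewrite -ltn_subRL.
- move=> [k /andP [yk kl] ->]; apply/(nthP d); exists (k - y).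
  + by rewrite size_drop; apply: ltn_sub2r => //; exact: leq_ltn_trans yk kl.
  + by rewrite nth_drop subnKC.
Qed.

Lemma Qdrop v X i Y : Y <= size v ->
  (forall k, k < size v -> ((exists2 j, j < i & X j = nth d v k) <-> k < Y)) ->
  Q v X i <-> X i \notin drop Y.+1 v.
Proof.
move=> Hy Hc; split.
- move=> HQ; apply/negP => /memdrop [[|k] /andP [yk kl] Xi] //.
  have [j ji Xj] := HQ k kl Xi.
  have := proj1 (Hc k (ltnW kl)) (ex_intro2 _ _ j ji Xj).
  by rewrite ltnNge -ltnS yk.
- move=> Hn k kl Xi; case: (ltnP k Y) => kY.
  + exact: (proj2 (Hc k (ltnW kl)) kY).
  + exfalso; move/negP: Hn; apply; apply/memdrop; exists k.+1 => //.
    by rewrite ltnS kY.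
Qed.

Lemma inv v X i : uniq v -> (forall j, j < i -> Q v X j) ->
  Yf v X i <= size v /\
  forall k, k < size v -> ((exists2 j, j < i & X j = nth d v k) <-> k < Yf v X i).
Proof.
move=> Uv; elim: i => [|i IH] H.
  by split => // k _; split => // [[j]].
have [Hy Hc] := IH (fun j ji => H j (ltnW ji)).
have Hnd := proj1 (Qdrop _ _ _ _ Hy Hc) (H i (ltnSn i)).
rewrite /= /step; case: ifP => [/andP [yl /eqP Xi] | Hcond].
- split => // k kl; split.
  + move=> [j]; rewrite ltnS leq_eqVlt => /orP [/eqP -> | ji] Xj.
    * move: Xj; rewrite Xi => /eqP; rewrite nth_uniq // => /eqP ->; exact: ltnSn.
    * by apply: ltnW; rewrite ltnS; apply/(Hc k kl); exists j.
  + rewrite ltnS leq_eqVlt => /orP [/eqP -> | kY].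
    * by exists i.
    * by have [j ji Xj] := proj2 (Hc k kl) kY; exists j => //; apply: ltnW.
- split => // k kl; split.
  + move=> [j]; rewrite ltnS leq_eqVlt => /orP [/eqP -> | ji] Xj.
    * case: (ltngtP k (Yf v X i)) => // [Yk|kY].
      - exfalso; move/negP: Hnd; apply; apply/memdrop; exists k => //; by rewrite Yk kl.
      - by move: Hcond; rewrite -kY kl Xj eqxx.
    * by apply/(Hc k kl); exists j.
  + move=> kY; have [j ji Xj] := proj2 (Hc k kl) kY; exists j => //; exact: ltnW.
Qed.

Lemma partA (v : seq T) n (X : nat -> T) : uniq v -> precedence v n X <->
      exists Y : nat -> nat,
        [/\ Y 0 = 0,
            (forall i, i <= n -> Y i <= size v) &
            (forall i, i < n -> Dcons v (X i) (Y i) (Y i.+1))].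
Proof.
move=> Uv; split.
- move=> /(precP _ _ _ Uv) HQ; exists (Yf v X); split => //.
  + move=> i iN; apply: (proj1 (inv i Uv _)) => j ji; apply: HQ; exact: leq_trans ji iN.
  + move=> i iN; have [Hy Hc] := inv i Uv (fun j ji => HQ j (ltn_trans ji iN)).
    by rewrite DconsE (proj1 (Qdrop _ _ _ _ Hy Hc) (HQ i iN)) /= eqxx.
- move=> [Y [Y0 Yb HD]].
  have YE : forall i, i <= n -> Y i = Yf v X i.
    elim=> [//|i IH] iN; have := HD i iN; rewrite DconsE => /andP [_ /eqP ->].
    by rewrite IH // ltnW.
  apply/(precP _ _ _ Uv).
  suff : forall i, i <= n -> forall j, j < i -> Q v X j.
    by move=> H i iN; apply: (H i.+1 iN); exact: ltnSn.
  elim=> [//|i IH] iN j; rewrite ltnS leq_eqVlt => /orP [/eqP -> | ji]; last first.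
    by apply: IH => //; apply: ltnW.
  have [Hy Hc] := inv i Uv (IH (ltnW iN)).
  apply/(Qdrop _ _ _ _ Hy Hc); have := HD i iN; rewrite DconsE -YE ?(ltnW iN) //.
  by case/andP.
Qed.
End S.

Section B.
Variables (T : eqType) (v : seq T) (n : nat) (DX : nat -> seq T) (DY : nat -> seq nat) (a : T).
Hypothesis HY0 : forall y, (y \in DY 0) = (y == 0).
Hypothesis HG : forall i, i < n -> Dcons_GAC v (DX i) (DY i) (DY i.+1).

Definition C (X : nat -> T) (Y : nat -> nat) lo hi :=
  (forall j, lo <= j < hi -> X j \in DX j /\ Dcons v (X j) (Y j) (Y j.+1)) /\
  (forall j, lo <= j <= hi -> Y j \in DY j).

Lemma backw k : k <= n -> forall y, y \in DY k -> exists X Y, Y k = y /\ C X Y 0 k.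
Proof.
elim: k => [|k IH] kn y Hy.
  exists (fun _ => a), (fun _ => 0); move: Hy; rewrite HY0 => /eqP ->; split => //.
  split => // [[|j]] //= _; by rewrite HY0.
have [_ [_ H3]] := HG k kn.
have [x [y0 [Hx Hy0 HD]]] := H3 y Hy.
have [X [Y [Yk [C1 C2]]]] := IH (ltnW kn) y0 Hy0.
exists (fun j => if j == k then x else X j), (fun j => if j == k.+1 then y else Y j).
split; first by rewrite eqxx.
split.
- move=> j /andP [_ jk]; rewrite eqSS; case: eqP => [->|/eqP jnk].
    by rewrite (ltn_eqF (ltnSn k)) Yk.
  have jk' : j < k by rewrite ltn_neqAle jnk -ltnS.
  rewrite (ltn_eqF jk); apply: C1; by rewrite jk'.
- move=> j /andP [_ jk]; case: eqP => [->//|/eqP jnk].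
  apply: C2; by rewrite leq0n /= -ltnS ltn_neqAle jnk jk.
Qed.

Lemma forw dd s : s + dd = n -> forall y, y \in DY s -> exists X Y, Y s = y /\ C X Y s n.
Proof.
elim: dd s => [|dd IH] s sn y Hy.
  exists (fun _ => a), (fun _ => y); split => //; rewrite addn0 in sn; subst s; split.
  - move=> j /andP [a1 a2]; exfalso; by rewrite ltnNge a1 in a2.
  - move=> j; rewrite -eqn_leq => /eqP <-; done.
have sN : s < n by rewrite -sn addnS ltnS leq_addr.
have [_ [H2 _]] := HG s sN.
have [x [y' [Hx Hy' HD]]] := H2 y Hy.
have [X [Y [Yk [C1 C2]]]] := IH s.+1 ltac:(by rewrite addSnnS) y' Hy'.
exists (fun j => if j == s then x else X j), (fun j => if j == s then y else Y j).
split; first by rewrite eqxx.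
split.
- move=> j /andP [sj jn]; case: eqP => [->|/eqP jns]; first by rewrite (gtn_eqF (ltnSn s)) Yk.
  have sj' : s < j by rewrite ltn_neqAle eq_sym jns.
  rewrite (gtn_eqF (ltn_trans sj' (ltnSn j))); apply: C1; by rewrite sj'.
- move=> j /andP [sj jn]; case: eqP => [->//|/eqP jns].
  apply: C2; by rewrite jn ltn_neqAle eq_sym jns sj.
Qed.
End B.

Theorem mainTheorem8 (T : eqType) (v : seq T) (n : nat) :
  uniq v ->
  (* (a) decomposition is correct *)
  (forall X : nat -> T,
      precedence v n X <->
      exists Y : nat -> nat,
        [/\ Y 0 = 0,
            (forall i, i <= n -> Y i <= size v) &
            (forall i, i < n -> Dcons v (X i) (Y i) (Y i.+1))]) /\
  (* (b) GAC on the decomposition implies GAC on Precedence *)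
  (forall (DX : nat -> seq T) (DY : nat -> seq nat),
      (forall y, (y \in DY 0) = (y == 0)) ->
      (forall i, i <= n -> forall y, y \in DY i -> y <= size v) ->
      (forall i, i < n -> DX i != [::]) ->
      (forall i, i <= n -> DY i != [::]) ->
      (forall i, i < n -> Dcons_GAC v (DX i) (DY i) (DY i.+1)) ->
      precedence_GAC v n DX).
Proof.
move=> Uv; split.
  by move=> X; apply: (partA _ (X 0) v n X Uv).
move=> DX DY HY0 HYb _ _ HG i iN a Ha.
have [H1 _] := HG i iN.
have [y [y' [Hy Hy' HD]]] := H1 a Ha.
have [Xb [Yb [Ybi [B1 B2]]]] := backw n DX DY a HY0 HG i (ltnW iN) y Hy.
have [Xf [Yfw [Yfwi [F1 F2]]]] := forw DX DY a HG (n - i.+1) i.+1 (subnKC iN) y' Hy'.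
exists (fun j => if j < i then Xb j else if j == i then a else Xf j).
split; last split.
- move=> j jn; case: ltngtP => ji.
  + by case: (B1 j); rewrite ?ji.
  + by case: (F1 j); rewrite ?ji.
  + by rewrite ji.
- by rewrite ltnn eqxx.
apply/(partA _ a v n _ Uv); exists (fun j => if j <= i then Yb j else Yfw j); split.
- by apply/eqP; rewrite -HY0; apply: B2.
- move=> j jn; apply: (HYb j jn); case: leqP => ji.
  + by apply: B2; rewrite ji.
  + by apply: F2; rewrite ji.
- move=> j jn; case: ltngtP => ji.
  + by case: (B1 j); rewrite ?ji.
  + by case: (F1 j); rewrite ?ji.
  + by rewrite ji Ybi Yfwi.
Qed.
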